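(* Let $r,s,t,u,v$ be non-negative integers with $u+v=4t-r-s+3$. Let $G=(r,s,t,t,t,u)$ and $H=(r,s,t,t,t,v)$, with interesting factors $g(x)$ and $h(x)$ respectively. Then $$g(x)=-h(-x+6t+4).$$
   Context: All graphs are finite and simple. For integers $1\le j\le k$, a $(j,k)$-biclique is a graph whose vertex set is the disjoint union of a $j$-clique and a $k$-clique, with an arbitrary set of additional edges each joining a vertex of the $j$-clique to a vertex of the $k$-clique. For non-negative integers $a,b,c,d,e,f$, the notation $(a,b,c,d,e,f)$ denotes the $(3,k)$-biclique with $k=a+b+c+d+e+f$, whose $3$-clique is $\{v_1,v_2,v_3\}$, in which every vertex of the $k$-clique is adjacent to exactly one or exactly two of $v_1,v_2,v_3$, and exactly $a$ (resp. $b$, $c$) vertices of the $k$-clique are adjacent to $v_1$ only (resp. $v_2$ only, $v_3$ only), and exactly $d$ (resp. $e$, $f$) vertices of the $k$-clique are adjacent to exactly $v_2$ and $v_3$ (resp. exactly $v_1$ and $v_3$, exactly $v_1$ and $v_2$). This determines the graph up to isomorphism. The interesting factor of a $(3,k)$-biclique $G$ is the cubic polynomial $P_G(x)/(x)_k$, where $P_G$ is the chromatic polynomial and $(x)_k=x(x-1)\cdots(x-k+1)$. *)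

(* Defs.v *)
From HB Require Import structures.
From mathcomp Require Import all_boot all_order all_algebra.
Set Implicit Arguments. Unset Strict Implicit. Unset Printing Implicit Defensive.
Import Order.TTheory GRing.Theory Num.Theory.

(* Vertex set: 'I_3 (the 3-clique v1,v2,v3 = 0,1,2) + 'I_k (the k-clique).
   The vertices of the k-clique are numbered 0..k-1; the first a are adjacent
   to v1 only, the next b to v2 only, the next c to v3 only, the next d to
   exactly v2,v3, the next e to exactly v1,v3, the last f to exactly v1,v2. *)

Definition bk (a b c d e f : nat) : nat := a + b + c + d + e + f.

Definition bvert (a b c d e f : nat) : finType := ('I_3 + 'I_(bk a b c d e f))%type.

Definition cross_adj (a b c d e f : nat) (i : nat) (j : 'I_3) : bool :=
  if i < a then nat_of_ord j == 0
  else if i < a + b then nat_of_ord j == 1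
  else if i < a + b + c then nat_of_ord j == 2
  else if i < a + b + c + d then nat_of_ord j != 0
  else if i < a + b + c + d + e then nat_of_ord j != 1
  else nat_of_ord j != 2.

Definition badj (a b c d e f : nat) (x y : bvert a b c d e f) : bool :=
  match x, y with
  | inl i, inl j => i != j
  | inr i, inr j => i != j
  | inl j, inr i => cross_adj a b c d e f i j
  | inr i, inl j => cross_adj a b c d e f i j
  end.

Definition chrom (a b c d e f : nat) (n : nat) : nat :=
  #|[set col : {ffun bvert a b c d e f -> 'I_n} |
     [forall x, forall y, badj x y ==> (col x != col y)]]|.

Definition falling (k : nat) (x : int) : int := \prod_(i < k) (x - i%:Z)%R.

Definition interesting_factor (a b c d e f : nat) (g : {poly int}) : Prop :=
  forall n : nat, ((chrom a b c d e f n)%:Z = g.[n%:Z] * falling (bk a b c d e f) n%:Z)%R.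

(* Main.v *)
Require Import Defs.
From Stdlib Require Import ZArith Lia.
From HB Require Import structures.
From mathcomp Require Import all_boot all_order all_algebra.
Import GRing.Theory.
Local Open Scope ring_scope.

Definition zofint (x : int) : Z :=
  match x with Posz n => Z.of_nat n | Negz n => Z.sub (Z.opp (Z.of_nat n)) 1 end.

Lemma zofint_inj : injective zofint.
Proof. case=> [m|m] [n|n] /= H; [congr Posz|exfalso|exfalso|congr Negz]; lia. Qed.

Lemma zofintP (n : nat) : zofint n%:Z = Z.of_nat n. Proof. by []. Qed.
Lemma zofint_natr (n : nat) : zofint n%:R = Z.of_nat n. Proof. by rewrite natz. Qed.

Lemma zofintN x : zofint (- x) = Z.opp (zofint x).
Proof. by case: x => [[|m]|m] //=; lia. Qed.

Lemma zofint_subn (m n : nat) : zofint (m%:Z - n%:Z) = Z.sub (Z.of_nat m) (Z.of_nat n).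
Proof.
case: (leqP n m) => H.
  by rewrite subzn // zofintP -minusE; move/leP: H => H; lia.
rewrite -opprB subzn; last exact: ltnW. rewrite zofintN zofintP -minusE; move/ltP: H => H; lia.
Qed.

Lemma zofintD x y : zofint (x + y) = Z.add (zofint x) (zofint y).
Proof.
case: x => [m|m]; case: y => [n|n].
- by rewrite -PoszD !zofintP -plusE; lia.
- by rewrite !NegzE zofint_subn !zofintN !zofintP; lia.
- by rewrite addrC !NegzE zofint_subn !zofintN !zofintP; lia.
- by rewrite !NegzE -opprD -PoszD !zofintN !zofintP -plusE; lia.
Qed.

Lemma zofintM x y : zofint (x * y) = Z.mul (zofint x) (zofint y).
Proof.
case: x => [m|m]; case: y => [n|n].
- by rewrite -PoszM !zofintP -multE; lia.
- by rewrite !NegzE mulrN !zofintN -PoszM !zofintP -multE; lia.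
- by rewrite !NegzE mulNr !zofintN -PoszM !zofintP -multE; lia.
- by rewrite !NegzE mulrNN -PoszM !zofintN !zofintP -multE; lia.
Qed.

Lemma zofintB x y : zofint (x - y) = Z.sub (zofint x) (zofint y).
Proof. by rewrite zofintD zofintN. Qed.

Ltac zify_int := apply: zofint_inj;
  rewrite ?(zofintB, zofintD, zofintM, zofintN, zofint_natr, zofintP);
  rewrite -?plusE -?multE ?(Nat2Z.inj_add, Nat2Z.inj_mul).

Lemma poly_eval_eq (p q : {poly int}) : (forall x : int, p.[x] = q.[x]) -> p = q.
Proof.
move=> H; apply/eqP; rewrite -subr_eq0; apply/eqP.
apply: (@roots_geq_poly_eq0 _ _ [seq i%:Z | i <- iota 0 (size (p - q))]).
- by apply/allP=> x _; rewrite /root hornerD hornerN H subrr.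
- by rewrite map_inj_uniq ?iota_uniq // => i j [].
- by rewrite size_map size_iota.
Qed.

Section ZS.
Local Open Scope Z_scope.
Lemma solve_v (r s t u v : nat) : (u + v + r + s = 4 * t + 3)%nat ->
  Z.of_nat v = 4 * Z.of_nat t + 3 - Z.of_nat u - Z.of_nat r - Z.of_nat s.
Proof. rewrite -!plusE -!multE; lia. Qed.
End ZS.

Definition Pm (m : nat) : {poly int} := 'X - (m%:R)%:P.

Definition gpoly (a b c d e f : nat) : {poly int} :=
  Pm (a + e + f) * Pm (b + d + f) * Pm (c + d + e)
  - Pm (a + b + d + e + f) * Pm (c + d + e)
  - Pm (a + c + d + e + f) * Pm (b + d + f)
  - Pm (b + c + d + e + f) * Pm (a + e + f)
  + Pm (bk a b c d e f) + Pm (bk a b c d e f).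

Lemma final_ident (r s t u v : nat) (huv : (u + v + r + s = 4 * t + 3)%N) :
  gpoly r s t t t u = - (gpoly r s t t t v \Po (((6 * t + 4)%N)%:R%:P - 'X)).
Proof.
apply: poly_eval_eq => x.
rewrite hornerN horner_comp /gpoly /Pm /bk !hornerE.
zify_int. rewrite (solve_v _ _ _ _ _ huv). ring.
Qed.




Notation "[[ b ]]" := ((nat_of_bool b)%:R : int).

Section Count.
Variable T : finType.

Lemma sumI (A : {set T}) : \sum_(y : T) [[y \in A]] = #|A|%:R.
Proof.
rewrite -sum1_card natr_sum [RHS]big_mkcond /=. apply: eq_bigr => y _.
by case: (y \in A).
Qed.

Lemma natr_and (b1 b2 : bool) : [[b1 && b2]] = [[b1]] * [[b2]].
Proof. by case: b1; case: b2; rewrite ?mul1r ?mul0r. Qed.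

Lemma cardD1z (y : T) (A : {set T}) : #|A :\ y|%:R = #|A|%:R - [[y \in A]] :> int.
Proof. rewrite (cardsD1 y A) natrD; zify_int; ring. Qed.

Variables A0 A1 A2 : {set T}.

Lemma L_in (y0 y1 : T) : y0 != y1 ->
  \sum_(y2 : T) [[ [&& y0 != y2, y1 != y2 & y2 \in A2] ]] =
  #|A2|%:R - [[y0 \in A2]] - [[y1 \in A2]].
Proof.
move=> H01.
transitivity (\sum_(y2 : T) [[y2 \in A2 :\ y0 :\ y1]]).
  apply: eq_bigr => y2 _; rewrite !inE ![y2 == _]eq_sym.
  by case: (y0 != y2); case: (y1 != y2).
rewrite sumI cardD1z cardD1z !inE eq_sym H01 /=; done.
Qed.

Lemma step1 (y0 y1 : T) :
  \sum_(y2 : T) [[ [&& y0 != y1, y0 != y2, y1 != y2, y0 \in A0, y1 \in A1 & y2 \in A2] ]] =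
  [[ [&& y0 != y1, y0 \in A0 & y1 \in A1] ]] * (#|A2|%:R - [[y0 \in A2]] - [[y1 \in A2]]).
Proof.
case H: [&& y0 != y1, y0 \in A0 & y1 \in A1].
  case/and3P: H => H01 H0 H1; rewrite mul1r -(L_in _ _ H01).
  by apply: eq_bigr => y2 _; rewrite H01 H0 H1 /=; case: (y0 != y2).
rewrite mul0r big1 // => y2 _.
move: H; case: (y0 != y1); case: (y0 \in A0); case: (y1 \in A1) => //=;
  by rewrite ?andbF.
Qed.


Lemma step2 (y0 : T) :
  \sum_(y1 : T) [[ [&& y0 != y1, y0 \in A0 & y1 \in A1] ]] *
     (#|A2|%:R - [[y0 \in A2]] - [[y1 \in A2]]) =
  [[y0 \in A0]] * ((#|A2|%:R - [[y0 \in A2]]) * (#|A1|%:R - [[y0 \in A1]])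
                   - (#|A1 :&: A2|%:R - [[y0 \in A1 :&: A2]])).
Proof.
transitivity (\sum_(y1 : T) ([[y0 \in A0]] * (#|A2|%:R - [[y0 \in A2]]) * [[y1 \in A1 :\ y0]]
   - [[y0 \in A0]] * [[y1 \in (A1 :&: A2) :\ y0]])).
  apply: eq_bigr => y1 _; rewrite !inE [y1 == y0]eq_sym.
  case: (y0 != y1); case: (y0 \in A0); case: (y1 \in A1); case: (y1 \in A2);
    rewrite /=; zify_int; ring.
rewrite sumrB -!mulr_sumr !sumI !cardD1z; zify_int; ring.
Qed.

Lemma step3 :
  \sum_(y0 : T) [[y0 \in A0]] * ((#|A2|%:R - [[y0 \in A2]]) * (#|A1|%:R - [[y0 \in A1]])
                   - (#|A1 :&: A2|%:R - [[y0 \in A1 :&: A2]])) =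
  #|A0|%:R * #|A1|%:R * #|A2|%:R - #|A0 :&: A1|%:R * #|A2|%:R
  - #|A0 :&: A2|%:R * #|A1|%:R - #|A1 :&: A2|%:R * #|A0|%:R
  + #|A0 :&: A1 :&: A2|%:R + #|A0 :&: A1 :&: A2|%:R.
Proof.
transitivity (\sum_(y0 : T) (#|A1|%:R * #|A2|%:R * [[y0 \in A0]]
   - #|A1|%:R * [[y0 \in A0 :&: A2]] - #|A2|%:R * [[y0 \in A0 :&: A1]]
   - #|A1 :&: A2|%:R * [[y0 \in A0]] + [[y0 \in A0 :&: A1 :&: A2]]
   + [[y0 \in A0 :&: A1 :&: A2]])).
  apply: eq_bigr => y0 _; rewrite !inE.
  case: (y0 \in A0); case: (y0 \in A1); case: (y0 \in A2);
    rewrite /=; zify_int; ring.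
rewrite !big_split /= !sumrN -!mulr_sumr !sumI; zify_int; ring.
Qed.

Lemma count3 :
  \sum_(y0 : T) \sum_(y1 : T) \sum_(y2 : T)
     [[ [&& y0 != y1, y0 != y2, y1 != y2, y0 \in A0, y1 \in A1 & y2 \in A2] ]] =
  #|A0|%:R * #|A1|%:R * #|A2|%:R - #|A0 :&: A1|%:R * #|A2|%:R
  - #|A0 :&: A2|%:R * #|A1|%:R - #|A1 :&: A2|%:R * #|A0|%:R
  + #|A0 :&: A1 :&: A2|%:R + #|A0 :&: A1 :&: A2|%:R.
Proof.
rewrite -step3; apply: eq_bigr => y0 _; rewrite -step2.
by apply: eq_bigr => y1 _; rewrite step1.
Qed.

End Count.

Ltac nlia := try unfold bk in *;
  repeat match goal with H : is_true (_ <= _)%N |- _ => move/leP: H => H; try rewrite -!plusE in H end;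
  try apply/leP; try rewrite -!plusE; lia.


Lemma falling_ffact k n : falling k n%:Z = (n ^_ k)%:R.
Proof.
elim: k n => [|k IH] n; first by rewrite /falling big_ord0.
rewrite /falling big_ord_recl /=.
case: n => [|m]; first by rewrite subr0 mul0r ffact0n.
rewrite ffactSS natrM subr0 -IH /falling; congr (_ * _); first by rewrite natz.
by apply: eq_bigr => i _; rewrite /bump /= subzSS.
Qed.

Definition o0 : 'I_3 := @Ordinal 3 0 isT.
Definition o1 : 'I_3 := @Ordinal 3 1 isT.
Definition o2 : 'I_3 := @Ordinal 3 2 isT.

Section Graph.
Variables a b c d e f : nat.
Notation K := (bk a b c d e f).
Notation cr := (cross_adj a b c d e f).

Lemma clsA i j : (i < a)%N -> cr i j = (nat_of_ord j == 0%N).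
Proof. by rewrite /cross_adj => ->. Qed.
Lemma clsB i j : (a <= i < a + b)%N -> cr i j = (nat_of_ord j == 1%N).
Proof.
case/andP=> H1 H2; rewrite /cross_adj.
have -> : (i < a)%N = false by apply/negbTE; rewrite -leqNgt.
by rewrite H2.
Qed.
Lemma clsC i j : (a + b <= i < a + b + c)%N -> cr i j = (nat_of_ord j == 2%N).
Proof.
case/andP=> H1 H2; rewrite /cross_adj.
have -> : (i < a)%N = false by apply/negbTE; rewrite -leqNgt; nlia.
have -> : (i < a + b)%N = false by apply/negbTE; rewrite -leqNgt; nlia.
by rewrite H2.
Qed.
Lemma clsD i j : (a + b + c <= i < a + b + c + d)%N -> cr i j = (nat_of_ord j != 0%N).
Proof.
case/andP=> H1 H2; rewrite /cross_adj.
have -> : (i < a)%N = false by apply/negbTE; rewrite -leqNgt; nlia.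
have -> : (i < a + b)%N = false by apply/negbTE; rewrite -leqNgt; nlia.
have -> : (i < a + b + c)%N = false by apply/negbTE; rewrite -leqNgt; nlia.
by rewrite H2.
Qed.
Lemma clsE i j : (a + b + c + d <= i < a + b + c + d + e)%N -> cr i j = (nat_of_ord j != 1%N).
Proof.
case/andP=> H1 H2; rewrite /cross_adj.
have -> : (i < a)%N = false by apply/negbTE; rewrite -leqNgt; nlia.
have -> : (i < a + b)%N = false by apply/negbTE; rewrite -leqNgt; nlia.
have -> : (i < a + b + c)%N = false by apply/negbTE; rewrite -leqNgt; nlia.
have -> : (i < a + b + c + d)%N = false by apply/negbTE; rewrite -leqNgt; nlia.
by rewrite H2.
Qed.
Lemma clsF i j : (a + b + c + d + e <= i)%N -> cr i j = (nat_of_ord j != 2%N).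
Proof.
move=> H1; rewrite /cross_adj.
have -> : (i < a)%N = false by apply/negbTE; rewrite -leqNgt; nlia.
have -> : (i < a + b)%N = false by apply/negbTE; rewrite -leqNgt; nlia.
have -> : (i < a + b + c)%N = false by apply/negbTE; rewrite -leqNgt; nlia.
have -> : (i < a + b + c + d)%N = false by apply/negbTE; rewrite -leqNgt; nlia.
have -> : (i < a + b + c + d + e)%N = false by apply/negbTE; rewrite -leqNgt; nlia.
by [].
Qed.

Lemma const_int lo hi (v : nat) (F : nat -> nat) :
  (forall i, (lo <= i < hi)%N -> F i = v) -> (\sum_(lo <= i < hi) F i)%N = ((hi - lo) * v)%N.
Proof. by move=> H; rewrite (eq_big_nat _ _ H) sum_nat_const_nat. Qed.

Lemma card_cls (S : {set 'I_K}) (h : bool -> bool -> bool -> bool) :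
  (forall i : 'I_K, (i \in S) = h (cr i o0) (cr i o1) (cr i o2)) ->
  #|S| = (a * h true false false + b * h false true false + c * h false false true
         + d * h false true true + e * h true false true + f * h true true false)%N.
Proof.
move=> HS.
rewrite -sum1_card big_mkcond /=.
rewrite (eq_bigr (fun i : 'I_K => nat_of_bool (h (cr i o0) (cr i o1) (cr i o2))));
  last by move=> i _; rewrite HS; case: (h _ _ _).
rewrite -(big_mkord xpredT (fun i => nat_of_bool (h (cr i o0) (cr i o1) (cr i o2)))).
rewrite (@big_cat_nat _ _ _ a) ?leq0n; last by nlia.
rewrite (@big_cat_nat _ _ _ (a + b) a K); [|nlia|nlia].
rewrite (@big_cat_nat _ _ _ (a + b + c) (a + b) K); [|nlia|nlia].
rewrite (@big_cat_nat _ _ _ (a + b + c + d) (a + b + c) K); [|nlia|nlia].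
rewrite (@big_cat_nat _ _ _ (a + b + c + d + e) (a + b + c + d) K); [|nlia|nlia].
rewrite (const_int _ _ (h true false false)); last by move=> i /andP[_ H]; rewrite !clsA.
rewrite (const_int _ _ (h false true false)); last by move=> i H; rewrite !clsB.
rewrite (const_int _ _ (h false false true)); last by move=> i H; rewrite !clsC.
rewrite (const_int _ _ (h false true true)); last by move=> i H; rewrite !clsD.
rewrite (const_int _ _ (h true false true)); last by move=> i H; rewrite !clsE.
rewrite (const_int _ _ (h true true false)); last by move=> i /andP[H _]; rewrite !clsF.
rewrite subn0 (addKn a b) (addKn (a+b) c) (addKn (a+b+c) d) (addKn (a+b+c+d) e) /bk (addKn (a+b+c+d+e) f).
rewrite /= !addnA. by []. by [].
Qed.
End Graph.


Section Col.
Variables a b c d e f n : nat.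
Notation K := (bk a b c d e f).
Notation cr := (cross_adj a b c d e f).
Notation V := (bvert a b c d e f).
Notation Y := ('I_n * 'I_n * 'I_n)%type.
Notation Q := {ffun 'I_K -> 'I_n}.

Definition tri (y : Y) (j : 'I_3) : 'I_n :=
  if nat_of_ord j == 0%N then y.1.1 else if nat_of_ord j == 1%N then y.1.2 else y.2.

Definition phi (p : Y * Q) : {ffun V -> 'I_n} :=
  [ffun x : V => match x with inl j => tri p.1 j | inr i => p.2 i end].

Definition psi (col : {ffun V -> 'I_n}) : Y * Q :=
  ((col (inl o0), col (inl o1), col (inl o2)), [ffun i => col (inr i)]).

Lemma phiK : cancel phi psi.
Proof.
move=> [ [ [y0 y1] y2] q]; rewrite /psi /phi !ffunE /=; congr (_, _).
by apply/ffunP => i; rewrite !ffunE.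
Qed.

Lemma psiK : cancel psi phi.
Proof.
move=> col; apply/ffunP => -[j|i]; rewrite !ffunE //=.
by case: j => [ [|[|[|m] ] ] Hj] //=; congr (col (inl _)); apply: val_inj.
Qed.

Definition okc (q : Q) (j : 'I_3) (y : 'I_n) :=
  [forall i : 'I_K, cr i j ==> (q i != y)].
Definition Aset (q : Q) (j : 'I_3) : {set 'I_n} := [set y | okc q j y].

Definition proper (col : {ffun V -> 'I_n}) :=
  [forall x, forall y, badj x y ==> (col x != col y)].

Lemma proper_phi y0 y1 y2 q :
  proper (phi ((y0, y1, y2), q)) = injectiveb q &&
  [&& y0 != y1, y0 != y2, y1 != y2, y0 \in Aset q o0, y1 \in Aset q o1 & y2 \in Aset q o2].
Proof.
apply/idP/idP.
  move/forallP => H.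
  have Hxy : forall x z, badj x z -> phi (y0, y1, y2, q) x != phi (y0, y1, y2, q) z.
    by move=> x z; move/forallP: (H x) => /(_ z) /implyP.
  apply/andP; split.
    apply/injectiveP => i i' Eq; apply/eqP; apply: contraT => Hne.
    by have := Hxy (inr i) (inr i') Hne; rewrite !ffunE /= Eq eqxx.
  apply/and5P; split; last (apply/andP; split).
  - by have := Hxy (inl o0) (inl o1) isT; rewrite !ffunE.
  - by have := Hxy (inl o0) (inl o2) isT; rewrite !ffunE.
  - by have := Hxy (inl o1) (inl o2) isT; rewrite !ffunE.
  - rewrite inE; apply/forallP => i; apply/implyP => Hc.
    by have := Hxy (inl o0) (inr i) Hc; rewrite !ffunE /= eq_sym.
  - rewrite inE; apply/forallP => i; apply/implyP => Hc.
    by have := Hxy (inl o1) (inr i) Hc; rewrite !ffunE /= eq_sym.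
  - rewrite inE; apply/forallP => i; apply/implyP => Hc.
    by have := Hxy (inl o2) (inr i) Hc; rewrite !ffunE /= eq_sym.
case/andP => /injectiveP Hinj /and5P [H01 H02 H12 HA0 /andP [HA1 HA2] ].
rewrite !inE in HA0 HA1 HA2.
have HA : forall (j : 'I_3) (i : 'I_K), cr i j -> q i != tri (y0, y1, y2) j.
  move=> j i Hc; case: j Hc => [ [|[|[|m] ] ] Hj] //= Hc.
  - by move/forallP: HA0 => /(_ i) /implyP; apply; rewrite /cross_adj /= in Hc *.
  - by move/forallP: HA1 => /(_ i) /implyP; apply; rewrite /cross_adj /= in Hc *.
  - by move/forallP: HA2 => /(_ i) /implyP; apply; rewrite /cross_adj /= in Hc *.
apply/forallP => x; apply/forallP => z; apply/implyP.
case: x => [j|i]; case: z => [j'|i'] /= Hadj; rewrite !ffunE /=.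
- case: j Hadj => [ [|[|[|m] ] ] Hj]; case: j' => [ [|[|[|m'] ] ] Hj'] //= _;
    by rewrite ?H01 ?H02 ?H12 // eq_sym ?H01 ?H02 ?H12.
- by rewrite eq_sym; apply: HA.
- by apply: HA.
- by apply: contra Hadj => /eqP /Hinj ->.
Qed.

End Col.


Section Main.
Variables a b c d e f n : nat.
Notation K := (bk a b c d e f).
Notation V := (bvert a b c d e f).
Notation Y := ('I_n * 'I_n * 'I_n)%type.
Notation Q := {ffun 'I_K -> 'I_n}.

Definition good (q : Q) (y0 y1 y2 : 'I_n) :=
  [&& y0 != y1, y0 != y2, y1 != y2, y0 \in @Aset a b c d e f n q o0, y1 \in @Aset a b c d e f n q o1 & y2 \in @Aset a b c d e f n q o2].

Lemma chrom_sum : (chrom a b c d e f n)%:R =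
  \sum_(q : Q) [[injectiveb q]] * \sum_(y0 : 'I_n) \sum_(y1 : 'I_n) \sum_(y2 : 'I_n) [[good q y0 y1 y2]] :> int.
Proof.
rewrite /chrom -sumI.
transitivity (\sum_(col : {ffun V -> 'I_n}) [[@proper a b c d e f n col]]).
  by apply: eq_bigr => col _; rewrite inE.
rewrite (reindex (@phi a b c d e f n) (onW_bij _ (Bijective (@phiK a b c d e f n) (@psiK a b c d e f n)))).
transitivity (\sum_(y : Y) \sum_(q : Q) [[@proper a b c d e f n (@phi a b c d e f n (y, q))]]).
  by rewrite pair_bigA; apply: eq_bigr => -[y q].
rewrite exchange_big; apply: eq_bigr => q _.
transitivity (\sum_(y0 : 'I_n) \sum_(y1 : 'I_n) \sum_(y2 : 'I_n) [[injectiveb q]] * [[good q y0 y1 y2]]).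
  rewrite [RHS]pair_bigA [RHS]pair_bigA; apply: eq_bigr => -[ [y0 y1] y2] _ /=.
  by rewrite proper_phi natr_and.
rewrite mulr_sumr; apply: eq_bigr => y0 _; rewrite mulr_sumr; apply: eq_bigr => y1 _.
by rewrite mulr_sumr.
Qed.

Definition Nset (j : 'I_3) : {set 'I_K} := [set i : 'I_K | cross_adj a b c d e f i j].

Lemma Aset_eq (q : Q) j : @Aset a b c d e f n q j = ~: (q @: Nset j).
Proof.
apply/setP => y; rewrite !inE /okc; apply/idP/idP.
  move/forallP => H; apply/imsetP => -[i Hi Ey].
  by move: (H i); rewrite inE in Hi; rewrite Hi Ey eqxx.
move=> Hn; apply/forallP => i; apply/implyP => Hc.
apply: contra Hn => /eqP <-; apply: imset_f; by rewrite inE.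
Qed.

Lemma cardC_img (q : Q) (X : {set 'I_K}) : injective q ->
  #|~: (q @: X)|%:R = n%:R - #|X|%:R :> int.
Proof.
move=> Hq; have := cardsC (q @: X); rewrite card_ord card_imset //.
move: #|~: (q @: X)| => m H.
have -> : n%:R = (#|X| + m)%:R :> int by rewrite H.
rewrite natrD; zify_int; ring.
Qed.

Lemma inner_val (q : Q) : injective q ->
  \sum_(y0 : 'I_n) \sum_(y1 : 'I_n) \sum_(y2 : 'I_n) [[good q y0 y1 y2]] =
  (gpoly a b c d e f).[n%:Z].
Proof.
move=> Hq; rewrite /good count3 !Aset_eq -!setCU -!imsetU !(cardC_img _ _ Hq).
rewrite (@card_cls a b c d e f (Nset o0) (fun x _ _ => x)); last by move=> i; rewrite inE.
rewrite (@card_cls a b c d e f (Nset o1) (fun _ x _ => x)); last by move=> i; rewrite inE.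
rewrite (@card_cls a b c d e f (Nset o2) (fun _ _ x => x)); last by move=> i; rewrite inE.
rewrite (@card_cls a b c d e f (Nset o0 :|: Nset o1) (fun x y _ => x || y)); last by move=> i; rewrite !inE.
rewrite (@card_cls a b c d e f (Nset o0 :|: Nset o2) (fun x _ y => x || y)); last by move=> i; rewrite !inE.
rewrite (@card_cls a b c d e f (Nset o1 :|: Nset o2) (fun _ x y => x || y)); last by move=> i; rewrite !inE.
rewrite (@card_cls a b c d e f (Nset o0 :|: Nset o1 :|: Nset o2) (fun x y z => x || y || z)); last by move=> i; rewrite !inE.
rewrite /gpoly /Pm /bk !hornerE /=.
zify_int; ring.
Qed.

Lemma chrom_formula : ((chrom a b c d e f n)%:Z = (gpoly a b c d e f).[n%:Z] * falling K n%:Z)%R.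
Proof.
rewrite -natz chrom_sum falling_ffact.
transitivity (\sum_(q : Q) [[injectiveb q]] * (gpoly a b c d e f).[n%:Z]).
  apply: eq_bigr => q _; case: injectiveP => Hq; first by rewrite inner_val.
  by rewrite !mul0r.
rewrite -mulr_suml mulrC; congr (_ * _).
transitivity (\sum_(q : Q) [[q \in [set q0 : Q | injectiveb q0] ]]).
  by apply: eq_bigr => q _; rewrite inE.
by rewrite sumI card_inj_ffuns !card_ord.
Qed.

End Main.

Theorem mainTheorem7 (r s t u v : nat) (huv : (u + v + r + s = 4 * t + 3)%N) :
  exists g h : {poly int},
    interesting_factor r s t t t u g /\
    interesting_factor r s t t t v h /\
    g = - (h \Po (((6 * t + 4)%N)%:R%:P - 'X)).
Proof.
exists (gpoly r s t t t u), (gpoly r s t t t v); split; last split.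
- by move=> n; apply: chrom_formula.
- by move=> n; apply: chrom_formula.
- exact: final_ident.
Qed.
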